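(* Let $\alpha$ be a curve in $\mathbb{R}^3$ with nonzero curvature, let $\alpha_T$ be its tangent indicatrix, and let $\beta$ be an evolute-direction curve of $\alpha_T$ (an $X$-direction curve of $\alpha_T$ with $N_\beta=T_T$). Then: (i) $\alpha$ is a helix if and only if $\beta$ is a helix; (ii) $\alpha$ is a slant helix if and only if $\beta$ is a slant helix.
   Context: Let $\alpha:I\subset\mathbb{R}\to\mathbb{R}^3$ be a unit-speed curve with arc length $s$, curvature $\kappa>0$, torsion $\tau$ and Frenet frame $\{T,N,B\}$. The tangent indicatrix of $\alpha$ is the curve $\alpha_T=T$ on the unit sphere. Its arc length is $s_T=\int\kappa\,ds$. Its Frenet apparatus is $\{T_T,N_T,B_T,\kappa_T,\tau_T\}$, with $\frac{dT_T}{ds_T}=\kappa_TN_T$, $\frac{dN_T}{ds_T}=-\kappa_TT_T+\tau_TB_T$ and $\frac{dB_T}{ds_T}=-\tau_TN_T$. Let $x,y,z$ be real functions of $s_T$ with $x^2+y^2+z^2=1$, and set $X=xT_T+yN_T+zB_T$. An integral curve $\beta$ of $X$, meaning $d\beta/ds_T=X$, is an $X$-direction curve of $\alpha_T$. It is regarded as a unit-speed Frenet curve with frame $\{T_\beta=X,N_\beta,B_\beta\}$, curvature $\kappa_\beta>0$ and torsion $\tau_\beta$. $\beta$ is an evolute-direction curve of $\alpha_T$ if $N_\beta=T_T$. A curve with curvature $k>0$ and torsion $t$ is a helix if its unit tangent makes a constant angle with a fixed line; equivalently, $t/k$ is constant. It is a slant helix if its principal normal makes a constant angle with a fixed line; equivalently,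 $\frac{k^2}{(k^2+t^2)^{3/2}}(t/k)'$ is constant, where $'$ is the derivative with respect to arc length. *)

(* Defs.v *)
From Stdlib Require Import Reals.
From Coquelicot Require Import Coquelicot.
Open Scope R_scope.

Definition V3 : Type := (R * R * R)%type.
Definition v1 (v : V3) : R := fst (fst v).
Definition v2 (v : V3) : R := snd (fst v).
Definition v3 (v : V3) : R := snd v.

Definition vadd (u v : V3) : V3 := (v1 u + v1 v, v2 u + v2 v, v3 u + v3 v).
Definition vscal (a : R) (v : V3) : V3 := (a * v1 v, a * v2 v, a * v3 v).
Definition dot (u v : V3) : R := v1 u * v1 v + v2 u * v2 v + v3 u * v3 v.
Definition cross (u v : V3) : V3 :=
  (v2 u * v3 v - v3 u * v2 v,
   v3 u * v1 v - v1 u * v3 v,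
   v1 u * v2 v - v2 u * v1 v).

Definition is_open_int (I : R -> Prop) : Prop :=
  exists a b : Rbar, Rbar_lt a b /\
    forall s : R, I s <-> (Rbar_lt a s /\ Rbar_lt s b).

Definition frenet_curve (I : R -> Prop) (g T N B : R -> V3) (k t : R -> R)
  : Prop :=
  forall s : R, I s ->
    is_derive g s (T s) /\
    is_derive T s (vscal (k s) (N s)) /\
    is_derive N s (vadd (vscal (- k s) (T s)) (vscal (t s) (B s))) /\
    is_derive B s (vscal (- t s) (N s)) /\
    0 < k s /\
    dot (T s) (T s) = 1 /\ dot (N s) (N s) = 1 /\ dot (T s) (N s) = 0 /\
    B s = cross (T s) (N s).

Definition image_of (I : R -> Prop) (f : R -> R) : R -> Prop :=
  fun u => exists s, I s /\ f s = u.

(* The vector field V makes a constant angle with a fixed line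
   (direction given by the unit vector u): <V, u> = cos(angle) is constant. *)
Definition const_angle_with_line (I : R -> Prop) (V : R -> V3) : Prop :=
  exists u : V3, dot u u = 1 /\ exists c : R, forall s, I s -> dot (V s) u = c.

Definition is_helix (I : R -> Prop) (T : R -> V3) : Prop :=
  const_angle_with_line I T.

Definition is_slant_helix (I : R -> Prop) (N : R -> V3) : Prop :=
  const_angle_with_line I N.

Definition dir_field (x y z : R -> R) (TT NT BT : R -> V3) (u : R) : V3 :=
  vadd (vadd (vscal (x u) (TT u)) (vscal (y u) (NT u))) (vscal (z u) (BT u)).

(* Main.v *)
Require Import Defs.
From Stdlib Require Import Reals Lra Classical.
From Coquelicot Require Import Coquelicot.
Open Scope R_scope.

Lemma der_fst {U V : NormedModule R_AbsRing} (f : R -> U * V) s l :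
  is_derive f s l -> is_derive (fun t => fst (f t)) s (fst l).
Proof.
  intro H. unfold is_derive in *.
  apply (filterdiff_comp f (fun t : U * V => fst t) _ (fun t : U * V => fst t) H).
  apply filterdiff_linear, is_linear_fst.
Qed.

Lemma der_snd {U V : NormedModule R_AbsRing} (f : R -> U * V) s l :
  is_derive f s l -> is_derive (fun t => snd (f t)) s (snd l).
Proof.
  intro H. unfold is_derive in *.
  apply (filterdiff_comp f (fun t : U * V => snd t) _ (fun t : U * V => snd t) H).
  apply filterdiff_linear, is_linear_snd.
Qed.

Lemma der_v1 (f : R -> V3) s l : is_derive f s l -> is_derive (fun t => v1 (f t)) s (v1 l).
Proof. intro H. apply (der_fst (fun t => fst (f t))). apply der_fst, H. Qed.
Lemma der_v2 (f : R -> V3) s l : is_derive f s l -> is_derive (fun t => v2 (f t)) s (v2 l).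
Proof. intro H. apply (der_snd (fun t => fst (f t))). apply der_fst, H. Qed.
Lemma der_v3 (f : R -> V3) s l : is_derive f s l -> is_derive (fun t => v3 (f t)) s (v3 l).
Proof. intro H. apply der_snd, H. Qed.

Lemma der_dot (f : R -> V3) s l u : is_derive f s l ->
  is_derive (fun t => dot (f t) u) s (dot l u).
Proof.
  intro H.
  assert (H1 := is_derive_scal _ _ (v1 u) _ (der_v1 f s l H)).
  assert (H2 := is_derive_scal _ _ (v2 u) _ (der_v2 f s l H)).
  assert (H3 := is_derive_scal _ _ (v3 u) _ (der_v3 f s l H)).
  assert (H4 := is_derive_plus _ _ _ _ _ (is_derive_plus _ _ _ _ _ H1 H2) H3).
  unfold dot. 
  eapply is_derive_ext; [|replace (v1 l * v1 u + v2 l * v2 u + v3 l * v3 u) with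
    (plus (plus (v1 u * v1 l) (v2 u * v2 l)) (v3 u * v3 l)); [exact H4|]].
  - intro t. simpl. unfold plus; simpl. ring.
  - unfold plus; simpl. ring.
Qed.

Lemma scal_v3 (a : R) (v : V3) : scal a v = vscal a v.
Proof. destruct v as [[p q] r]. reflexivity. Qed.

Lemma dot_vscal a v u : dot (vscal a v) u = a * dot v u.
Proof. unfold dot, vscal, v1, v2, v3; simpl. ring. Qed.

Lemma open_int_loc I s : is_open_int I -> I s -> locally s I.
Proof.
  intros [a [b [_ Hab]]] Hs.
  assert (Ho : @open R_UniformSpace (fun x : R => Rbar_lt a x /\ Rbar_lt x b)).
  { apply open_and; [apply open_Rbar_gt | apply open_Rbar_lt]. }
  apply Hab in Hs. specialize (Ho s Hs).
  eapply filter_imp; [|exact Ho]. intros x Hx. apply Hab. exact Hx.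
Qed.

Lemma deriv_zero_of_const I (f : R -> R) s c df : is_open_int I -> I s ->
  (forall t, I t -> f t = c) -> is_derive f s df -> df = 0.
Proof.
  intros HI Hs Hc Hd.
  assert (H0 : is_derive f s 0).
  { apply (is_derive_ext_loc (fun _ => c)).
    - eapply filter_imp; [|exact (open_int_loc I s HI Hs)].
      intros t Ht. symmetry. apply Hc, Ht.
    - apply (is_derive_const (K:=R_AbsRing) (V:=R_NormedModule)). }
  apply is_derive_unique in Hd. apply is_derive_unique in H0. congruence.
Qed.

Lemma const_of_deriv_zero I (f : R -> R) : is_open_int I ->
  (forall s, I s -> is_derive f s 0) -> forall s1 s2, I s1 -> I s2 -> f s1 = f s2.
Proof.
  intros HI Hd s1 s2 H1 H2.
  destruct HI as [a [b [_ Hab]]].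
  assert (Hin : forall x, Rmin s1 s2 <= x <= Rmax s1 s2 -> I x).
  { intros x [Hx1 Hx2]. apply Hab.
    apply Hab in H1. apply Hab in H2. destruct H1, H2.
    unfold Rmin, Rmax in *. destruct (Rle_dec s1 s2); split.
    - apply (Rbar_lt_le_trans _ s1); [assumption | simpl; lra].
    - apply (Rbar_le_lt_trans _ s2); [simpl; lra | assumption].
    - apply (Rbar_lt_le_trans _ s2); [assumption | simpl; lra].
    - apply (Rbar_le_lt_trans _ s1); [simpl; lra | assumption]. }
  destruct (MVT_gen f s1 s2 (fun _ => 0)) as [c [_ Hc]].
  - intros x Hx. apply Hd, Hin. lra.
  - intros x Hx. apply continuity_pt_filterlim. apply (ex_derive_continuous (K:=R_AbsRing) (V:=R_NormedModule)).
    exists 0. apply Hd, Hin. exact Hx.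
  - lra.
Qed.

Lemma v3_eq (p q : V3) : v1 p = v1 q -> v2 p = v2 q -> v3 p = v3 q -> p = q.
Proof. destruct p as [[a b] c], q as [[d e] f]; unfold v1, v2, v3; simpl; intros; subst; reflexivity. Qed.

Theorem theorem4p7
  (I : R -> Prop) (alpha T N B : R -> V3) (kappa tau : R -> R)
  (sT : R -> R) (alphaT TT NT BT : R -> V3) (kT tT : R -> R)
  (x y z : R -> R) (beta Nb Bb : R -> V3) (kb tb : R -> R) :
  is_open_int I ->
  frenet_curve I alpha T N B kappa tau ->
  (forall s, I s -> is_derive sT s (kappa s)) ->
  (forall s, I s -> alphaT (sT s) = T s) ->
  frenet_curve (image_of I sT) alphaT TT NT BT kT tT ->
  (forall u, image_of I sT u -> x u ^ 2 + y u ^ 2 + z u ^ 2 = 1) ->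
  frenet_curve (image_of I sT) beta (dir_field x y z TT NT BT) Nb Bb kb tb ->
  (forall u, image_of I sT u -> Nb u = TT u) ->
  (is_helix I T <-> is_helix (image_of I sT) (dir_field x y z TT NT BT)) /\
  (is_slant_helix I N <-> is_slant_helix (image_of I sT) Nb).
Proof.
  intros HI Fa Hsd HaT FT Hxyz Fb HNb.
  set (X := dir_field x y z TT NT BT) in *.
  assert (Js : forall s, I s -> image_of I sT (sT s)).
  { intros s Hs. exists s. split; [exact Hs | reflexivity]. }
  assert (KEY : forall s, I s -> TT (sT s) = N s).
  { intros s Hs.
    destruct (FT (sT s) (Js s Hs)) as [Ha _].
    pose proof (is_derive_comp alphaT sT s _ _ Ha (Hsd s Hs)) as Hc.
    destruct (Fa s Hs) as [_ [HT [_ [_ [Hk _]]]]].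
    assert (Hc' : is_derive T s (scal (kappa s) (TT (sT s)))).
    { apply (is_derive_ext_loc (fun t => alphaT (sT t))); [|exact Hc].
      eapply filter_imp; [|exact (open_int_loc I s HI Hs)].
      intros t Ht. apply HaT, Ht. }
    rewrite scal_v3 in Hc'.
    pose proof (is_derive_unique _ _ _ (der_v1 _ _ _ HT)) as E1.
    pose proof (is_derive_unique _ _ _ (der_v1 _ _ _ Hc')) as F1.
    pose proof (is_derive_unique _ _ _ (der_v2 _ _ _ HT)) as E2.
    pose proof (is_derive_unique _ _ _ (der_v2 _ _ _ Hc')) as F2.
    pose proof (is_derive_unique _ _ _ (der_v3 _ _ _ HT)) as E3.
    pose proof (is_derive_unique _ _ _ (der_v3 _ _ _ Hc')) as F3.
    rewrite E1 in F1; rewrite E2 in F2; rewrite E3 in F3.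
    unfold vscal, v1, v2, v3 in F1, F2, F3; simpl in F1, F2, F3.
    apply v3_eq; unfold v1, v2, v3;
      eapply Rmult_eq_reg_l; [symmetry; eassumption | lra | symmetry; eassumption | lra
       | symmetry; eassumption | lra]. }
  assert (DX : forall u s, I s -> is_derive (fun t => dot (X (sT t)) u) s
                 (kappa s * (kb (sT s) * dot (N s) u))).
  { intros u s Hs.
    destruct (Fb (sT s) (Js s Hs)) as [_ [HX _]].
    rewrite HNb in HX by apply Js, Hs.
    pose proof (der_dot _ _ _ u (is_derive_comp X sT s _ _ HX (Hsd s Hs))) as H.
    rewrite scal_v3, !dot_vscal, KEY in H by exact Hs. exact H. }
  assert (DT : forall u s, I s -> is_derive (fun t => dot (T t) u) s (kappa s * dot (N s) u)).
  { intros u s Hs. destruct (Fa s Hs) as [_ [HT _]].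
    pose proof (der_dot _ _ _ u HT) as H. rewrite dot_vscal in H. exact H. }
  assert (kpos : forall s, I s -> 0 < kappa s).
  { intros s Hs. apply (Fa s Hs). }
  assert (kbpos : forall s, I s -> 0 < kb (sT s)).
  { intros s Hs. apply (Fb (sT s) (Js s Hs)). }
  split.
  - split.
    + intros [u [Hu [c Hc]]]. exists u. split; [exact Hu|].
      assert (N0 : forall s, I s -> dot (N s) u = 0).
      { intros s Hs. pose proof (deriv_zero_of_const I _ s c _ HI Hs Hc (DT u s Hs)) as E.
        apply Rmult_integral in E. destruct E as [E|E]; [specialize (kpos s Hs); lra | exact E]. }
      destruct (classic (exists s0, I s0)) as [[s0 Hs0]|Hne].
      * exists (dot (X (sT s0)) u). intros w [s [Hs <-]].
        apply (const_of_deriv_zero I (fun t => dot (X (sT t)) u)); auto.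
        intros t Ht. pose proof (DX u t Ht) as H. rewrite N0 in H by exact Ht.
        replace (kappa t * (kb (sT t) * 0)) with 0 in H by ring. exact H.
      * exists 0. intros w [s [Hs _]]. exfalso. apply Hne. exists s. exact Hs.
    + intros [u [Hu [c Hc]]]. exists u. split; [exact Hu|].
      assert (N0 : forall s, I s -> dot (N s) u = 0).
      { intros s Hs.
        assert (Hc' : forall t, I t -> dot (X (sT t)) u = c) by (intros t Ht; apply Hc, Js, Ht).
        pose proof (deriv_zero_of_const I _ s c _ HI Hs Hc' (DX u s Hs)) as E.
        specialize (kpos s Hs). specialize (kbpos s Hs).
        apply Rmult_integral in E. destruct E as [E|E]; [lra|].
        apply Rmult_integral in E. destruct E as [E|E]; [lra | exact E]. }
      destruct (classic (exists s0, I s0)) as [[s0 Hs0]|Hne].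
      * exists (dot (T s0) u). intros s Hs.
        apply (const_of_deriv_zero I (fun t => dot (T t) u)); auto.
        intros t Ht. pose proof (DT u t Ht) as H. rewrite N0 in H by exact Ht.
        replace (kappa t * 0) with 0 in H by ring. exact H.
      * exists 0. intros s Hs. exfalso. apply Hne. exists s. exact Hs.
  - split.
    + intros [u [Hu [c Hc]]]. exists u. split; [exact Hu|]. exists c.
      intros w [s [Hs <-]]. rewrite HNb by apply Js, Hs. rewrite KEY by exact Hs. auto.
    + intros [u [Hu [c Hc]]]. exists u. split; [exact Hu|]. exists c.
      intros s Hs. rewrite <- KEY by exact Hs. rewrite <- HNb by apply Js, Hs. apply Hc, Js, Hs.
Qed.
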